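(* Let $(X,\Sigma)$ be a measurable space, $(\mathcal{E}_t)_{t\ge0}$ a process of pavings, $\mathscr{A}=\{\mathsf{A}_t(\cdot|E)\colon E\in\mathcal{E}_t,\,t\ge0\}$ a parametric family of conditional aggregation operators, $f\in\mathbf{F}$ and $\boldsymbol{\mu}=(\mu_t)_{t\ge0}$ a family of monotone measures on $\Sigma$. Then for each $t\ge0$: (a) $\boldsymbol{\mu}_{\mathscr{A}}(0_X,t)=0$ if $t>0$, and $\boldsymbol{\mu}_{\mathscr{A}}(0_X,0)=\sup\{\mu_0(E)\colon E\in\mathcal{E}_0\}$; (b) $\boldsymbol{\mu}_{\mathscr{A}}(f,0)=\sup\{\mu_0(E)\colon E\in\mathcal{E}_0\}$; (c) $\boldsymbol{\mu}_{\mathscr{A}}(f,t)=\mu_t(X)$ whenever $X\in\mathcal{E}_t$ and $t\le\mathsf{A}_t(f|X)$.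
   Context: $0_X$ denotes the zero function on $X$. $\Sigma^0=\Sigma\setminus\{\emptyset\}$. $\mathbf{F}$ denotes the set of all $\Sigma$-measurable, nonnegative, bounded functions $f\colon X\to[0,\infty)$. A monotone measure is a map $\mu\colon\Sigma\to[0,\infty]$ with $\mu(B)\le\mu(C)$ whenever $B\subseteq C$, $\mu(\emptyset)=0$ and $\mu(X)>0$. For $E\in\Sigma^0$, a conditional aggregation operator (CAO) w.r.t. $E$ is a map $\mathsf{A}(\cdot|E)\colon\mathbf{F}\to[0,\infty]$ such that (C1) $\mathsf{A}(f|E)\le\mathsf{A}(g|E)$ whenever $f(x)\le g(x)$ for all $x\in E$, and (C2) $\mathsf{A}(\mathbf{1}_{X\setminus E}|E)=0$. A process of pavings is a family $(\mathcal{E}_t)_{t\ge0}$ with $\emptyset\in\mathcal{E}_t\subseteq\Sigma$ for all $t$; $\mathcal{E}_t^0=\mathcal{E}_t\setminus\{\emptyset\}$. A parametric family of CAOs (pFCA) $\{\mathsf{A}_t(\cdot|E)\colon E\in\mathcal{E}_t,\,t\ge0\}$ consists of CAOs $\mathsf{A}_t(\cdot|E)$ w.r.t. $E$ for each $t$ and $E\in\mathcal{E}_t^0$, with the convention $\mathsf{A}_t(\cdot|\emptyset)=\infty$. The generalized level measure is $\boldsymbol{\mu}_{\mathscr{A}}(f,t)=\sup\{\mu_t(E)\colon \mathsf{A}_t(f|E)\ge t,\ E\in\mathcal{E}_t\}$ for $t\ge0$. *)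

(* Defs.v *)
From HB Require Import structures.
From mathcomp Require Import all_boot all_order all_algebra.
From mathcomp Require Import all_classical all_reals.
From mathcomp Require Import ereal measure lebesgue_measure numfun.
Set Implicit Arguments. Unset Strict Implicit. Unset Printing Implicit Defensive.
Import Order.TTheory GRing.Theory Num.Theory.
Local Open Scope classical_set_scope.
Local Open Scope ring_scope.
Local Open Scope ereal_scope.

Section Defs.
Context {d : measure_display} {T : measurableType d} {R : realType}.

Definition inF (f : T -> R) : Prop :=
  measurable_fun setT f /\ (forall x, (0 <= f x)%R) /\
  exists M : R, forall x, (f x <= M)%R.

Definition monotone_measure (mu : set T -> \bar R) : Prop :=
  (forall B, measurable B -> 0 <= mu B) /\
  (forall B C, measurable B -> measurable C -> B `<=` C -> mu B <= mu C) /\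
  mu set0 = 0 /\ 0 < mu setT.

Definition isCAO (E : set T) (A : (T -> R) -> \bar R) : Prop :=
  (forall f, inF f -> 0 <= A f) /\
  (forall f g, inF f -> inF g -> (forall x, E x -> (f x <= g x)%R) -> A f <= A g) /\
  A (\1_(~` E)) = 0.

Definition paving_process (Ep : R -> set (set T)) : Prop :=
  forall t, (0 <= t)%R -> Ep t set0 /\ Ep t `<=` measurable.

Definition pFCA (Ep : R -> set (set T)) (A : R -> set T -> (T -> R) -> \bar R)
  : Prop :=
  forall t, (0 <= t)%R ->
    (forall E, Ep t E -> E <> set0 -> isCAO E (A t E)) /\
    (forall f, A t set0 f = +oo).

Definition level_measure (mu : R -> set T -> \bar R) (Ep : R -> set (set T))
  (A : R -> set T -> (T -> R) -> \bar R) (f : T -> R) (t : R) : \bar R :=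
  ereal_sup [set mu t E | E in [set E | Ep t E /\ t%:E <= A t E f]].

End Defs.

(* Main.v *)
Require Import Defs.
From HB Require Import structures.
From mathcomp Require Import all_boot all_order all_algebra.
From mathcomp Require Import all_classical all_reals.
From mathcomp Require Import ereal measure lebesgue_measure numfun.
From mathcomp Require Import measurable_realfun.
Import Order.TTheory GRing.Theory Num.Theory.
Local Open Scope classical_set_scope.
Local Open Scope ring_scope.
Local Open Scope ereal_scope.

Lemma inF0 (d : measure_display) (T : measurableType d) (R : realType) :
  @inF d T R (fun _ => 0%R).
Proof.
split; first exact: measurable_cst.
split=> [x|]; first by [].
by exists 0%R.
Qed.

Lemma inF_ind (d : measure_display) (T : measurableType d) (R : realType) (E : set T) :
  measurable E -> @inF d T R (\1_(~` E)).
Proof.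
move=> mE; split; first by apply/measurable_indicP; exact: measurableC.
split=> [x|]; first by rewrite indicE.
by exists 1%R => x; rewrite indicE; case: (x \in ~` E).
Qed.

Theorem proposition3p6 (d : measure_display) (T : measurableType d) (R : realType)
  (Ep : R -> set (set T)) (A : R -> set T -> (T -> R) -> \bar R)
  (mu : R -> set T -> \bar R) (f : T -> R) :
  paving_process Ep -> pFCA Ep A -> inF f ->
  (forall t, (0 <= t)%R -> monotone_measure (mu t)) ->
  forall t : R, (0 <= t)%R ->
    ((0 < t)%R -> level_measure mu Ep A (fun _ => 0%R) t = 0) /\
    level_measure mu Ep A (fun _ => 0%R) 0%R = ereal_sup [set mu 0%R E | E in Ep 0%R] /\
    level_measure mu Ep A f 0%R = ereal_sup [set mu 0%R E | E in Ep 0%R] /\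
    (Ep t setT -> t%:E <= A t setT f -> level_measure mu Ep A f t = mu t setT).
Proof.
move=> hE hA hf hmu t t0.
have Age0 : forall s g E, (0 <= s)%R -> inF g -> Ep s E -> 0 <= A s E g.
  move=> s g E s0 hg hE'.
  have [hA1 hA2] := hA s s0.
  have [->|En0] := eqVneq E set0; first by rewrite hA2 leey.
  by have [+ _] := hA1 E hE' (ltac:(by apply/eqP) : E <> set0); apply.
have lv0 : forall g, inF g -> level_measure mu Ep A g 0%R
    = ereal_sup [set mu 0%R E | E in Ep 0%R].
  move=> g hg; rewrite /level_measure; congr ereal_sup; congr image.
  apply/seteqP; split=> E /=; first by case.
  by move=> hE'; split=> //; apply: Age0.
split; last split; last split.
- move=> tpos; rewrite /level_measure; apply/le_anti/andP; split.
    apply: ge_ereal_sup => _ /= [E [hE' htE] <-].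
    have [->|En0] := eqVneq E set0.
      by have [_ [_ [-> _]]] := hmu t t0.
    exfalso.
    have [hA1 _] := hA t t0.
    have [_ [hmono hind]] := hA1 E hE' (ltac:(by apply/eqP) : E <> set0).
    have mE : measurable E by have [_ +] := hE t t0; apply.
    have : A t E (fun _ => 0%R) <= A t E (\1_(~` E)).
      apply: hmono; [exact: inF0|exact: inF_ind|].
      by move=> x _; rewrite indicE.
    rewrite hind => H.
    have := le_trans htE H; rewrite lee_fin leNgt tpos //.
  apply: le_ereal_sup_tmp; exists 0 => //; exists set0 => //.
    split; first by have [+ _] := hE t t0.
    by have [_ ->] := hA t t0; rewrite leey.
  by have [_ [_ [-> _]]] := hmu t t0.
- exact: lv0 (inF0 _ _ _).
- exact: lv0.
- move=> hX htX; rewrite /level_measure; apply/le_anti/andP; split.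
    apply: ge_ereal_sup => _ /= [E [hE' _] <-].
    have [_ [hm _]] := hmu t t0.
    apply: hm => //.
    by have [_ +] := hE t t0; apply.
  by apply: le_ereal_sup_tmp; exists (mu t setT) => //; exists setT.
Qed.
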